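(* Let $k\ge 3$ and let $w$ be a word over $\{a,b\}$. Let $p$ and $q$ be two consecutive occurrences of $u=ba^{k-1}$ in $w$ ($p$ before $q$), with sets of forbidden local positions $F_p$ and $F_q$. If $F_q=\{0,i,i+1,\dots,k-1\}$ for some $1\le i\le k-1$ and $|F_p|=|F_q|$, then $F_p=F_q$.
   Context: $\Sigma=\{a,b\}$. $S_k=\left(\Sigma^k\setminus\{ba^{k-1},b^{k-1}a\}\right)\cup\left(\Sigma^{k-1}\setminus\{a^{k-1},b^{k-1}\}\right)$, $u=ba^{k-1}$, $v=b^{k-1}a$. $\mathit{Pref}(S^* )$ denotes the set of prefixes of words in $S^*$. For $w=w_1\cdots w_n$, $w[i..j]=w_i\cdots w_j$ (empty if $i>j$). A position $j$, $0\le j\le n-1$, is forbidden in $w$ if $w[j+1..n]\notin\mathit{Pref}(S_k^* )$. An occurrence of $p\in\{u,v\}$ in $w$ is an index $s$ with $w[s+1..s+k]=p$; local position $i\in\{0,\dots,k-1\}$ is the position $s+i$ of $w$, and it is forbidden in the occurrence if $s+i$ is forbidden in $w$. Two occurrences of words from $\{u,v\}$ starting at $s<t$ overlap if $t<s+k$; they are consecutive if either they overlap or they are the only occurrences of $u$ or $v$ lying inside the factor $w[s+1..t+k]$. *)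

(* Defs.v *)
From mathcomp Require Import all_boot.
From Stdlib Require Import ClassicalEpsilon.
Set Implicit Arguments. Unset Strict Implicit. Unset Printing Implicit Defensive.

Definition la : bool := false.
Definition lb : bool := true.

Definition uw (k : nat) : seq bool := lb :: nseq k.-1 la.
Definition vw (k : nat) : seq bool := rcons (nseq k.-1 lb) la.

Definition inS (k : nat) (x : seq bool) : bool :=
  [&& size x == k, x != uw k & x != vw k] ||
  [&& size x == k.-1, x != nseq k.-1 la & x != nseq k.-1 lb].

Definition inSstar (k : nat) (x : seq bool) : Prop :=
  exists ws : seq (seq bool), all (inS k) ws /\ flatten ws = x.

Definition inPrefSstar (k : nat) (x : seq bool) : Prop :=
  exists y : seq bool, inSstar k (x ++ y).

(* Position j (0 <= j <= n-1) is forbidden in w iff w[j+1..n] = drop j w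
   is not in Pref(S_k^* ). *)
Definition forbidden (k : nat) (w : seq bool) (j : nat) : Prop :=
  j < size w /\ ~ inPrefSstar k (drop j w).

Definition toBool (P : Prop) : bool :=
  if excluded_middle_informative P then true else false.

(* an occurrence of p in w starting at s: w[s+1..s+k] = p *)
Definition occ (k : nat) (p w : seq bool) (s : nat) : Prop :=
  s + k <= size w /\ take k (drop s w) = p.

Definition Floc (k : nat) (w : seq bool) (s : nat) : {set 'I_k} :=
  [set i : 'I_k | toBool (forbidden k w (s + i))].

Definition consecutive (k : nat) (w : seq bool) (s t : nat) : Prop :=
  s < t /\
  (t < s + k \/
   forall r, s <= r -> r + k <= t + k -> r <> s -> r <> t ->
     ~ occ k (uw k) w r /\ ~ occ k (vw k) w r).

(* Main.v *)
Require Import Defs.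
From mathcomp Require Import all_boot zify.

From Stdlib Require Import ClassicalEpsilon.
Set Implicit Arguments. Unset Strict Implicit. Unset Printing Implicit Defensive.

Lemma tel (k : nat) (h : nat -> bool) (j : nat) :
  \sum_(x < k) (~~ h (j + x) : nat) + (~~ h (j + k) : nat) =
  (~~ h j : nat) + \sum_(x < k) (~~ h (j.+1 + x) : nat).
Proof.
have E1 := big_ord_recr k (fun x : 'I_k.+1 => (~~ h (j + x) : nat)).
have E2 := big_ord_recl k (fun x : 'I_k.+1 => (~~ h (j + x) : nat)).
simpl in E1, E2.
rewrite -E1 E2 addn0.
congr (_ + _); apply: eq_bigr => x _; by rewrite addSnnS.
Qed.

Lemma core (k D i : nat) (h nm : nat -> bool) :
  3 <= k -> k <= D -> 1 <= i -> i < k ->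
  (forall j, 1 <= j -> j < D -> h j = h (j+k) || (nm j && h (j + k.-1))) ->
  h 0 = h k.-1 ->
  (forall m, m < k -> ~~ h (D+m) = (m == 0) || (i <= m)) ->
  (2 <= i -> nm (D - k + i)) ->
  \sum_(m < k) (~~ h m : nat) = \sum_(m < k) (~~ h (D+m) : nat) ->
  forall m, m < k -> ~~ h m = (m == 0) || (i <= m).
Proof.
move=> k3 kD i1 ik rec h0 bnd nmj0 card.
have i1case : i = 1 \/ 2 <= i by lia.
case: i1case => [ie|i2].
  subst i.
  have allf : forall n j, D + k - j <= n -> 1 <= j -> j < D + k -> h j = false.
    elim=> [|n IH] j Hn Hj1 Hj2; first by lia.
    case: (ltnP j D) => HjD.
      rewrite rec //; rewrite IH; try lia; rewrite IH; try lia; by rewrite andbF.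
    have := bnd (j - D) ltac:(lia).
    have -> : D + (j - D) = j by lia.
    by case: (h j) => //=; lia.
  move=> m Hm.
  case: (posnP m) => [->|mp].
    by rewrite h0 (allf (D + k)) //; lia.
  by rewrite (allf (D+k)) //; lia.
set c := fun j => \sum_(x < k) (~~ h (j + x) : nat).
have monos : forall j, 1 <= j -> j < D -> h (j + k) -> h j.
  by move=> j a b H; rewrite rec // H.
have cle : forall j, 1 <= j -> j < D -> c j <= c j.+1.
  move=> j a b; have := tel k h j; rewrite -/(c j) -/(c j.+1).
  have := monos j a b; case: (h (j+k)); case: (h j) => //=; lia.
have cdrop : forall j, 1 <= j -> j < D -> h j -> ~~ h (j + k) -> c j.+1 = (c j).+1.
  move=> j a b H1 H2; have := tel k h j; rewrite -/(c j) -/(c j.+1).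
  rewrite H1 (negbTE H2) /=; lia.
have cmono : forall n a, 1 <= a -> a + n <= D -> c a <= c (a + n).
  elim=> [|n IH] a Ha Hn; first by rewrite addn0.
  apply: (leq_trans (IH a Ha ltac:(lia))).
  rewrite addnS; apply: cle; lia.
set j0 := D - k + i.
have j0E : j0 = D - k + i by [].
have hj0 : h j0.
  rewrite rec; try lia.
  have -> : j0 + k = D + i by lia.
  have -> : j0 + k.-1 = D + i.-1 by lia.
  have := bnd i.-1 ltac:(lia).
  have -> : (i.-1 == 0) || (i <= i.-1) = false by lia.
  move=> /negbFE ->; rewrite nmj0 //; by rewrite orbT.
have nhj0 : ~~ h (j0 + k).
  have -> : j0 + k = D + i by lia.
  by rewrite bnd // leqnn orbT.
have c1j0 : c 1 <= c j0 by have := cmono (j0 - 1) 1 (leqnn 1) ltac:(lia); have -> : 1 + (j0 - 1) = j0 by lia.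
have cj0D : c j0.+1 <= c D by have := cmono (D - j0.+1) j0.+1 ltac:(lia) ltac:(lia); have -> : j0.+1 + (D - j0.+1) = D by lia.
have dj0 := cdrop j0 ltac:(lia) ltac:(lia) hj0 nhj0.
have cD : c D = \sum_(m < k) (~~ h (D+m) : nat) by [].
have cardL : \sum_(m < k) (~~ h m : nat) + (~~ h k : nat) = (~~ h k.-1 : nat) + c 1.
  have := tel k h 0; rewrite /c.
  have -> : \sum_(x < k) (~~ h (0 + x) : nat) = \sum_(m < k) (~~ h m : nat)
    by apply: eq_bigr => x _; rewrite add0n.
  by rewrite add0n h0.
have hk : h k /\ ~~ h k.-1 /\ (c 1).+1 = c D.
  move: cardL; rewrite card -cD.
  case: (h k); case: (h k.-1) => /=; lia.
case: hk => hk [nhk1 c1D].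
have nodrop : forall j, 1 <= j -> j < D -> j <> j0 -> h j = h (j + k).
  move=> j a b ne.
  case E: (h (j + k)); first by rewrite (monos j a b E).
  apply/negbTE/negP => hj.
  have dj := cdrop j a b hj (negbT E).
  case: (ltnP j j0) => jj.
    have := cmono (j0 - j.+1) j.+1 ltac:(lia) ltac:(lia).
    have -> : j.+1 + (j0 - j.+1) = j0 by lia.
    have := cmono (j - 1) 1 (leqnn 1) ltac:(lia).
    have -> : 1 + (j - 1) = j by lia.
    lia.
  have := cmono (j - j0.+1) j0.+1 ltac:(lia) ltac:(lia).
  have -> : j0.+1 + (j - j0.+1) = j by lia.
  have := cmono (D - j.+1) j.+1 ltac:(lia) ltac:(lia).
  have -> : j.+1 + (D - j.+1) = D by lia.
  lia.
have pat : forall q cc, cc < k -> q * k + 1 <= D + cc ->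
    h (D + cc - q * k) = ((1 <= cc) && (cc < i)) || ((cc == i) && (1 <= q)).
  elim=> [|q IH] cc Hc Hq.
    rewrite mul0n subn0.
    have := bnd cc Hc; case: (h (D + cc)) => /=; lia.
  case: (boolP (D + cc - q.+1 * k == j0)) => [/eqP E|NE].
    have qk : q = 0 \/ k <= q * k by case: (q) => [|q']; [left|right; rewrite mulSn leq_addr]. rewrite E hj0. have [-> ->] : cc = i /\ q = 0 by lia.
    by rewrite eqxx /= orbT.
  rewrite nodrop; try lia.
  have -> : D + cc - q.+1 * k + k = D + cc - q * k by lia.
  rewrite IH; try lia.
move=> m Hm.
case: (posnP m) => [->|mp]; first by rewrite h0 nhk1.
set q := D.-1 %/ k.
have q1 : q * k <= D.-1 by apply: leq_divM.
have q2 : D.-1 < q.+1 * k by apply: ltn_ceil; lia.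
set cc := q * k + k - D.
have pk := pat q cc ltac:(lia) ltac:(lia).
rewrite (_ : D + cc - q * k = k) in pk; last by lia.
have pk1 := pat q (cc.-1) ltac:(lia) ltac:(lia).
have ccpos : 1 <= cc by move: pk; rewrite hk; lia.
rewrite (_ : D + cc.-1 - q * k = k.-1) in pk1; last by lia.
have cc1 : cc = 1 by move: pk pk1; rewrite hk (negbTE nhk1); lia.
case: (ltnP m k.-1) => mk.
  have := pat q.+1 m.+1 ltac:(lia) ltac:(lia).
  have -> : D + m.+1 - q.+1 * k = m by lia.
  move=> ->; lia.
have -> : m = k.-1 by lia.
rewrite nhk1; lia.
Qed.

Lemma toBoolP (P : Prop) : reflect P (toBool P).
Proof. rewrite /toBool; case: excluded_middle_informative => H; by constructor. Qed.

Lemma boolE3 (P Q R : Prop) (b c : bool) :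
  (P <-> (c /\ Q) \/ (b /\ R)) -> toBool P = (c && toBool Q) || (b && toBool R).
Proof.
case: b; case: c => E; case: (toBoolP P); case: (toBoolP Q); case: (toBoolP R) => //= HR HQ HP;
  exfalso; move: E; rewrite /is_true; firstorder (try discriminate).
Qed.

Lemma card_setE k (f : nat -> bool) :
  #|[set x : 'I_k | f x]| = \sum_(x < k) (f x : nat).
Proof.
rewrite -sum1_card big_mkcond /=; apply: eq_bigr => x _; rewrite inE; by case: (f x).
Qed.

Lemma dropl_cat' (T : Type) n (x y : seq T) : n <= size x -> drop n (x ++ y) = drop n x ++ y.
Proof.
move=> H; rewrite drop_cat; case: ltnP => // H2.
have -> : n = size x by lia.
by rewrite subnn drop0 drop_size.
Qed.

Lemma prefS_short k x : 2 <= k -> size x < k -> inPrefSstar k x.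
Proof.
move=> k2 sx; exists (nseq (k - size x) lb); exists [:: x ++ nseq (k - size x) lb].
split; last by rewrite /= cats0.
rewrite /= andbT /inS size_cat size_nseq.
have Hs : size x + (k - size x) = k by lia.
rewrite Hs eqxx /=.
have Hl : last la (x ++ nseq (k - size x) lb) = lb.
  rewrite last_cat; case E: (k - size x) => [|n]; first lia. by elim: n {E}.
apply/orP; left; apply/andP; split; apply/negP => /eqP E; move: Hl; rewrite E.
  rewrite /uw /=; case: k k2 {Hs sx E} => [|[|k']] //= _; by elim: k'.
by rewrite /vw last_rcons.
Qed.

Lemma prefS_long k x : 3 <= k -> k <= size x ->
  inPrefSstar k x <->
  (inS k (take k x) /\ inPrefSstar k (drop k x)) \/
  (inS k (take k.-1 x) /\ inPrefSstar k (drop k.-1 x)).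
Proof.
move=> k3 kx; split.
  case=> y [[|z ws] [/= Hall Hfl]].
    by move: Hfl => /(congr1 size); rewrite size_cat /=; lia.
  case/andP: Hall => Hz Hws.
  have Hsz : size z = k \/ size z = k.-1.
    by move: Hz; rewrite /inS => /orP [/andP [/eqP -> _]|/andP [/eqP -> _]]; [left|right].
  have Hle : size z <= size x by case: Hsz => ->; lia.
  have Ez : take (size z) x = z.
    by rewrite -(takel_cat y Hle) -Hfl take_size_cat.
  have Er : drop (size z) x ++ y = flatten ws.
    by rewrite -dropl_cat' // -Hfl drop_size_cat.
  case: Hsz => Hs; [left|right]; rewrite Hs in Ez Er; rewrite Ez; split => //; exists y; exists ws; by rewrite Er.
case=> [[Hin [y [ws [Hall Hfl]]]]|[Hin [y [ws [Hall Hfl]]]]].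
  exists y; exists (take k x :: ws); split; first by rewrite /= Hin Hall.
  by rewrite /= Hfl catA cat_take_drop.
exists y; exists (take k.-1 x :: ws); split; first by rewrite /= Hin Hall.
by rewrite /= Hfl catA cat_take_drop.
Qed.

Lemma Grec k w j : 3 <= k -> j + k <= size w ->
  inPrefSstar k (drop j w) <->
  (inS k (take k (drop j w)) /\ inPrefSstar k (drop (j + k) w)) \/
  (inS k (take k.-1 (drop j w)) /\ inPrefSstar k (drop (j + k.-1) w)).
Proof.
move=> k3 H; rewrite prefS_long //; last by rewrite size_drop; lia.
by rewrite !drop_drop (addnC k) (addnC k.-1).
Qed.

Lemma nth_td w r n m : m < n -> nth la (take n (drop r w)) m = nth la w (r + m).
Proof. by move=> H; rewrite nth_take // nth_drop. Qed.

Lemma occ_nth k p w r m : occ k p w r -> m < k -> nth la w (r + m) = nth la p m.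
Proof. by case=> _ <- H; rewrite nth_td. Qed.

Lemma nth_uw k m : m < k -> nth la (uw k) m = (m == 0).
Proof. by case: m => [|m] //= H; rewrite nth_nseq; case: ifP. Qed.

Lemma inS_short k r w : 3 <= k -> r + k.-1 <= size w ->
  inS k (take k.-1 (drop r w)) =
  (take k.-1 (drop r w) != nseq k.-1 la) && (take k.-1 (drop r w) != nseq k.-1 lb).
Proof.
move=> k3 H; rewrite /inS size_takel; last by rewrite size_drop; lia.
have -> : (k.-1 == k) = false by lia.
by rewrite eqxx.
Qed.

Lemma not_mono k r w a b : 3 <= k -> r + k.-1 <= size w -> a < k.-1 -> b < k.-1 ->
  nth la w (r + a) = lb -> nth la w (r + b) = la -> inS k (take k.-1 (drop r w)).
Proof.
move=> k3 H Ha Hb Ea Eb; rewrite inS_short //.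
apply/andP; split; apply/negP => /eqP E.
  by move: Ea; rewrite -(nth_td w r Ha) E nth_nseq Ha.
by move: Eb; rewrite -(nth_td w r Hb) E nth_nseq Hb.
Qed.
Lemma forbE k w j : j < size w ->
  toBool (forbidden k w j) = ~~ toBool (inPrefSstar k (drop j w)).
Proof.
move=> H; rewrite /forbidden.
case: (toBoolP (j < size w /\ ~ inPrefSstar k (drop j w)));
  case: (toBoolP (inPrefSstar k (drop j w))) => //=; tauto.
Qed.

Theorem lemma5 (k : nat) (w : seq bool) (s t : nat) (i : nat) :
  3 <= k ->
  occ k (uw k) w s -> occ k (uw k) w t ->
  consecutive k w s t ->
  1 <= i <= k.-1 ->
  Floc k w t = [set j : 'I_k | (val j == 0) || (i <= val j)] ->
  #|Floc k w s| = #|Floc k w t| ->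
  Floc k w s = Floc k w t.
Proof.
move=> k3 Os Ot [st Hc] /andP [i1 ik] HF Hcard.
have Ls : forall m, m < k -> nth la w (s + m) = (m == 0).
  by move=> m Hm; rewrite (occ_nth Os Hm) nth_uw.
have Lt : forall m, m < k -> nth la w (t + m) = (m == 0).
  by move=> m Hm; rewrite (occ_nth Ot Hm) nth_uw.
have Hsz : t + k <= size w by case: Ot.
have Hs0 := Os; case: Hs0 => Hsz' Es.
have H : forall r, s <= r -> r + k <= t + k -> r <> s -> r <> t ->
     ~ occ k (uw k) w r /\ ~ occ k (vw k) w r.
  case: Hc => // lt.
  have := Ls (t - s) ltac:(lia); have -> : s + (t - s) = t by lia.
  have := Lt 0 ltac:(lia); rewrite addn0 => ->.
  have -> : (t - s == 0) = false by lia.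
  by [].
set D := t - s.
have kD : k <= D.
  case: (leqP k D) => // lt.
  have := Ls (t - s) ltac:(lia); have -> : s + (t - s) = t by lia.
  have := Lt 0 ltac:(lia); rewrite addn0 => ->.
  have -> : (t - s == 0) = false by lia.
  by [].
set h := fun x => toBool (inPrefSstar k (drop (s + x) w)).
set nm := fun x => inS k (take k.-1 (drop (s + x) w)).
have R := @core k D i h nm k3 kD i1 ltac:(lia).
have fE : forall x, x < D + k -> toBool (forbidden k w (s + x)) = ~~ h x.
  move=> x Hx; rewrite forbE //; lia.
have fEt : forall m, m < k -> toBool (forbidden k w (t + m)) = ~~ h (D + m).
  move=> m Hm; rewrite -fE; last lia.
  by have -> : s + (D + m) = t + m by rewrite /D; lia.
have R' : forall m, m < k -> ~~ h m = (m == 0) || (i <= m).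
  apply: R.
  -
    move=> j j1 jD.
    have Hin : inS k (take k (drop (s + j) w)).
      have [Hu Hv] := H (s + j) ltac:(lia) ltac:(lia) ltac:(lia) ltac:(lia).
      rewrite /inS size_takel; last by rewrite size_drop; lia.
      rewrite eqxx /=; apply/orP; left; apply/andP; split; apply/negP => /eqP E.
        by apply: Hu; split => //; lia.
      by apply: Hv; split => //; lia.
    rewrite /h /nm (boolE3 (Grec k3 _)); last by lia.
    by rewrite Hin /= !addnA.
  -
    rewrite /h addn0 (boolE3 (Grec k3 _)) //.
    have -> : inS k (take k (drop s w)) = false.
      rewrite Es /inS /uw /= size_nseq eqxx /=.
      have -> : (k.-1.+1 == k.-1) = false by lia.
      by rewrite andbF.
    rewrite (@not_mono k s w 0 1) //; try lia.
      by rewrite (Ls 0) //; lia.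
    by rewrite (Ls 1) //; lia.
  -
    move=> m Hm; rewrite -fEt //.
    have := congr1 (fun S : {set (ordinal k)} => (Ordinal Hm) \in S) HF; rewrite /= /Floc !inE /=.
    by [].
  -
    move=> i2; rewrite /nm.
    set r := s + (D - k + i).
    have rE : r = t - k + i by rewrite /r /D; lia.
    have Hr : r + k.-1 <= size w by lia.
    rewrite inS_short //; apply/andP; split.
      apply/negP => /eqP E.
      have := nth_td w r (n := k.-1) (m := k - i) ltac:(lia).
      rewrite E nth_nseq (_ : k - i < k.-1); last lia.
      have -> : r + (k - i) = t + 0 by lia.
      by rewrite Lt //; lia.
    apply/negP => /eqP E.
    case: (ltnP 2 i) => i3.
      have := nth_td w r (n := k.-1) (m := k - i + 1) ltac:(lia).
      rewrite E nth_nseq (_ : k - i + 1 < k.-1); last lia.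
      have -> : r + (k - i + 1) = t + 1 by lia.
      by rewrite Lt //; lia.
    have [_ Hv] := H r ltac:(lia) ltac:(lia) ltac:(lia) ltac:(lia).
    apply: Hv; split; first lia.
    apply: (@eq_from_nth _ la).
      rewrite size_takel; last by rewrite size_drop; lia.
      by rewrite /vw size_rcons size_nseq; lia.
    move=> m; rewrite size_takel; last by rewrite size_drop; lia.
    move=> Hm; rewrite nth_td // /vw nth_rcons size_nseq nth_nseq.
    case: (ltnP m k.-1) => Hm1.
      by rewrite -(nth_td w r Hm1) E nth_nseq Hm1.
    have -> : m == k.-1 by lia.
    have -> : r + m = t + 1 by lia.
    by rewrite Lt //; lia.
  -
    move: Hcard; rewrite /Floc (@card_setE k (fun x => toBool (forbidden k w (s + x))))
      (@card_setE k (fun x => toBool (forbidden k w (t + x)))) => Hcard.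
    have E1 : \sum_(x < k) (~~ h x : nat) = \sum_(x < k) (toBool (forbidden k w (s + x)) : nat).
      by apply: eq_bigr => x _; rewrite fE //; have := ltn_ord x; lia.
    have E2 : \sum_(x < k) (~~ h (D + x) : nat) = \sum_(x < k) (toBool (forbidden k w (t + x)) : nat).
      by apply: eq_bigr => x _; rewrite fEt.
    by rewrite E1 E2.
apply/setP => x; rewrite HF !inE /= fE; last by have := ltn_ord x; lia.
exact: R'.
Qed.
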